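(* Let $M_t=(\mathcal S,\mathcal A,\bar r_t,p_t,s_1)$, $t=1,\dots,T$, be time-homogeneous communicating MDPs on common finite state and action sets, each with diameter at most $D$. Define $V_T=\sum_{t=1}^{T-1}|\rho^*(M_{t+1})-\rho^*(M_t)|$, $V^r_T=\sum_{t=1}^{T-1}\max_{s,a}|\bar r_{t+1}(s,a)-\bar r_t(s,a)|$ and $V^p_T=\sum_{t=1}^{T-1}\max_{s,a}\|p_{t+1}(\cdot\mid s,a)-p_t(\cdot\mid s,a)\|_1$. Then \[V_T\le V^r_T+D\,V^p_T.\]
   Context: A (time-homogeneous) MDP $M=(\mathcal S,\mathcal A,\bar r,p,s_1)$ has mean rewards $\bar r(s,a)\in[0,1]$ and transition probabilities $p(\cdot\mid s,a)$. It is communicating if for any two states $s,s'$, starting in $s$ one can reach $s'$ with positive probability by choosing appropriate actions. Its diameter is $\max_{s\ne s'}\min_\pi\mathbb E[T(s'\mid s,\pi)]$, where $T(s'\mid s,\pi)$ is the first time $s'$ is reached when starting in $s$ and following the stationary policy $\pi:\mathcal S\to\mathcal A$. The average reward of a stationary policy is $\rho(M,\pi)=\lim_{n\to\infty}\frac1n\mathbb E[\sum_{t=1}^n r_t]$ and $\rho^*(M)=\max_\pi\rho(M,\pi)$. *)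

(* Defs.v *)
From HB Require Import structures.
From mathcomp Require Import all_boot all_order all_algebra.
From mathcomp Require Import all_classical all_reals all_analysis.
Set Implicit Arguments. Unset Strict Implicit. Unset Printing Implicit Defensive.
Import Order.TTheory GRing.Theory Num.Theory numFieldNormedType.Exports.
Local Open Scope ring_scope.

(* A time-homogeneous MDP on finite state set S and action set A
   (the initial state s_1 is passed separately, it is common to all M_t). *)
Record mdp (R : realType) (S A : finType) := MDP {
  rbar : S -> A -> R;
  ptr  : S -> A -> S -> R        (* ptr s a s' = p(s' | s, a) *)
}.

Section MDP.
Variables (R : realType) (S A : finType).
Implicit Types (M : mdp R S A) (pi : S -> A).

Definition mdp_valid M :=
  (forall s a, 0 <= rbar M s a <= 1) /\
  (forall s a s', 0 <= ptr M s a s') /\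
  (forall s a, \sum_(s' : S) ptr M s a s' = 1).

Definition communicating M :=
  forall s s' : S, connect (fun x y => [exists a : A, 0 < ptr M x a y]) s s'.

Fixpoint Pn M pi (n : nat) (s s' : S) : R :=
  match n with
  | 0 => (s == s')%:R
  | n'.+1 => \sum_(u : S) Pn M pi n' s u * ptr M u (pi u) s'
  end.

(* E[r_t] for t = n.+1, starting in s1 *)
Definition exp_reward M pi (s1 : S) (n : nat) : R :=
  \sum_(s : S) Pn M pi n s1 s * rbar M s (pi s).

Definition avg_reward M pi (s1 : S) : R :=
  limn (fun n : nat => n%:R^-1 * \sum_(t < n) exp_reward M pi s1 t).

(* rho^*(M) = max over stationary policies (values are >= 0 since rewards in [0,1]) *)
Definition opt_avg_reward M (s1 : S) : R :=
  \big[Num.max/0]_(pi : {ffun S -> A}) avg_reward M pi s1.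

(* Qn n s u = P(s_{n+1} = u and s' not visited at times 2..n+1 | s_1 = s) *)
Fixpoint avoid M pi (s' : S) (n : nat) (s u : S) : R :=
  match n with
  | 0 => (s == u)%:R
  | n'.+1 => if u == s' then 0
             else \sum_(w : S) avoid M pi s' n' s w * ptr M w (pi w) u
  end.

(* E[T(s'|s,pi)] = sum_{n>=0} P(T > n), in extended reals *)
Definition exp_hitting_time M pi (s s' : S) : \bar R :=
  (\sum_(n <oo) (\sum_(u : S) avoid M pi s' n s u)%:E)%E.

Definition diameter M : \bar R :=
  \big[Order.max/-oo%E]_(s : S) \big[Order.max/-oo%E]_(s' : S | s' != s)
     \big[Order.min/+oo%E]_(pi : {ffun S -> A}) exp_hitting_time M pi s s'.

End MDP.

Definition var_opt (R : realType) (S A : finType) (M : nat -> mdp R S A)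
  (s1 : S) (T : nat) : R :=
  \sum_(1 <= t < T) `|opt_avg_reward (M t.+1) s1 - opt_avg_reward (M t) s1|.

Definition var_reward (R : realType) (S A : finType) (M : nat -> mdp R S A)
  (T : nat) : R :=
  \sum_(1 <= t < T) \big[Num.max/0]_(s : S) \big[Num.max/0]_(a : A)
      `|rbar (M t.+1) s a - rbar (M t) s a|.

Definition var_trans (R : realType) (S A : finType) (M : nat -> mdp R S A)
  (T : nat) : R :=
  \sum_(1 <= t < T) \big[Num.max/0]_(s : S) \big[Num.max/0]_(a : A)
      \sum_(s' : S) `|ptr (M t.+1) s a s' - ptr (M t) s a s'|.

(* Main.v *)
Require Import Defs.
From HB Require Import structures.
From mathcomp Require Import all_boot all_order all_algebra.
From mathcomp Require Import all_classical all_reals all_analysis.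
From mathcomp Require Import ring lra.
Import Order.TTheory GRing.Theory Num.Theory numFieldNormedType.Exports.
Local Open Scope classical_set_scope.
Local Open Scope ring_scope.
Set Implicit Arguments. Unset Strict Implicit. Unset Printing Implicit Defensive.
Section PartA.
Variables (R : realType) (S A : finType) (M : mdp R S A).
Hypothesis MV : mdp_valid M.

Definition Pv (s : S) (a : A) (h : S -> R) := \sum_(s' : S) ptr M s a s' * h s'.

Lemma Pn_ge0 (pi : S -> A) n s s' : 0 <= Pn M pi n s s'.
Proof.
case: MV => _ [p0 _].
elim: n s' => [|n IH] s' /=; first by rewrite ler0n.
by apply: sumr_ge0 => u _; apply: mulr_ge0.
Qed.

Lemma Pn_sum1 (pi : S -> A) n s : \sum_(s' : S) Pn M pi n s s' = 1.
Proof.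
case: MV => _ [_ p1].
elim: n => [|n IH] /=.
  rewrite (bigD1 s) //= eqxx big1 ?addr0 // => u /negbTE; rewrite eq_sym => ->; done.
rewrite exchange_big /=.
rewrite -IH; apply: eq_bigr => u _.
by rewrite -mulr_sumr p1 mulr1.
Qed.

Definition Hn (pi : S -> A) (s1 : S) (h : S -> R) n :=
  \sum_(s : S) Pn M pi n s1 s * h s.

Lemma Hn_step (pi : S -> A) s1 h n :
  \sum_(u : S) Pn M pi n s1 u * Pv u (pi u) h = Hn pi s1 h n.+1.
Proof.
rewrite /Hn /Pv /=.
under eq_bigr do rewrite mulr_sumr.
rewrite exchange_big /=; apply: eq_bigr => s' _.
by rewrite mulr_suml; apply: eq_bigr => u _; rewrite mulrA.
Qed.

Lemma Hn0 (pi : S -> A) s1 h : Hn pi s1 h 0 = h s1.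
Proof.
rewrite /Hn /= (bigD1 s1) //= eqxx mul1r big1 ?addr0 // => u /negbTE.
by rewrite eq_sym => ->; rewrite mul0r.
Qed.

Lemma sum_exp_reward (pi : S -> A) s1 h n :
  \sum_(t < n) exp_reward M pi s1 t =
  \sum_(t < n) \sum_(s : S) Pn M pi t s1 s * (rbar M s (pi s) + Pv s (pi s) h - h s)
  + h s1 - Hn pi s1 h n.
Proof.
elim: n => [|n IH]; first by rewrite !big_ord0 add0r Hn0 subrr.
rewrite !big_ord_recr /= IH.
have -> : \sum_(s : S) Pn M pi n s1 s * (rbar M s (pi s) + Pv s (pi s) h - h s)
  = exp_reward M pi s1 n + Hn pi s1 h n.+1 - Hn pi s1 h n.
  rewrite -Hn_step /exp_reward /Hn -!big_split -sumrB /=; apply: eq_bigr => s _.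
  by rewrite !mulrDr mulrN.
by rewrite /=; lra.
Qed.

Lemma Hn_span (pi : S -> A) s1 h (D : R) n :
  (forall s s', h s' - h s <= D) ->
  `|h s1 - Hn pi s1 h n| <= D.
Proof.
move=> hD.
have -> : h s1 - Hn pi s1 h n = \sum_(s : S) Pn M pi n s1 s * (h s1 - h s).
  rewrite /Hn -[h s1 in LHS]mul1r -(Pn_sum1 pi n s1) mulr_suml -sumrB.
  by apply: eq_bigr => s _; rewrite mulrBr.
rewrite -[D]mul1r -(Pn_sum1 pi n s1) mulr_suml.
apply: le_trans (ler_norm_sum _ _ _) _.
apply: ler_sum => s _; rewrite normrM ger0_norm ?Pn_ge0 //.
apply: ler_wpM2l; first exact: Pn_ge0.
by rewrite ler_norml; have := hD s s1; have := hD s1 s; lra.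
Qed.

End PartA.
Section Conv.
Variable R : realType.

Lemma small_eventually (B e : R) : 0 <= B -> 0 < e ->
  exists N : nat, (0 < N)%N /\ forall n : nat, (N <= n)%N -> B / n%:R <= e.
Proof.
move=> B0 e0.
have := archi_boundP (divr_ge0 B0 (ltW e0)).
set k := Num.Def.archi_bound _ => Hk.
exists k.+1; split => // n Hn.
have n0 : (0 : R) < n%:R by rewrite ltr0n; apply: leq_trans Hn.
rewrite ler_pdivrMr //.
have : (k%:R : R) <= n%:R by rewrite ler_nat; apply: leq_trans Hn.
move: Hk; rewrite ltr_pdivrMr // => Hk Hkn.
have : B < n%:R * e by apply: lt_le_trans Hk _; rewrite ler_wpM2r // ltW.
by rewrite mulrC => /ltW.
Qed.

Lemma cvg_bound (u : nat -> R) (c B : R) : 0 <= B ->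
  (forall n, (0 < n)%N -> `|u n - c| <= B / n%:R) -> u @ \oo --> c.
Proof.
move=> B0 Hu; apply/cvgrPdist_le => e e0.
have [N [N0 HN]] := small_eventually B0 e0.
exists N => // n /= Nn.
rewrite distrC; apply: le_trans (Hu n _) (HN n Nn).
by apply: leq_trans Nn.
Qed.

Lemma limn_le_bound (u : nat -> R) (c B : R) : 0 <= B -> 0 <= c ->
  (forall n, (0 < n)%N -> u n <= c + B / n%:R) -> limn u <= c.
Proof.
move=> B0 c0 Hu.
have [cu|ncu] := pselect (cvgn u); last by rewrite dvgP.
apply/ler_addgt0Pr => e e0.
apply: limr_le => //.
have [N [N0 HN]] := small_eventually B0 e0.
exists N => // n /= Nn.
apply: le_trans (Hu n _) _; first by apply: leq_trans Nn.
by rewrite lerD2l; apply: HN.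
Qed.

End Conv.
Section PartB.
Variables (R : realType) (S A : finType) (M : mdp R S A).
Hypothesis MV : mdp_valid M.
Variable (a0 : A) (lam : R).
Hypothesis lam0 : 0 <= lam.
Hypothesis lam1 : lam < 1.

Let K := (1 - lam)^-1.

Lemma K_gt0 : 0 < K.
Proof. by rewrite /K invr_gt0 subr_gt0. Qed.

Lemma K_eq : K * (1 - lam) = 1.
Proof. by rewrite /K mulVf // subr_eq0 eq_sym lt_eqF. Qed.

Definition Qv (v : S -> R) s a := rbar M s a + lam * Pv M s a v.
Definition Tb (v : S -> R) s := \big[Num.max/Qv v s a0]_(a : A) Qv v s a.

Lemma Tb_ge v s a : Qv v s a <= Tb v s.
Proof.
rewrite /Tb (bigD1 a) //=.
by rewrite le_max lexx.
Qed.

Lemma Tb_ex v s : exists a, Tb v s = Qv v s a.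
Proof.
rewrite /Tb; apply: (big_ind (fun x => exists a, x = Qv v s a)).
- by exists a0.
- move=> x y [a ->] [b ->].
  by case: (leP (Qv v s a) (Qv v s b)) => _; [exists b | exists a].
- by move=> a _; exists a.
Qed.

Lemma Tb_le v s c : (forall a, Qv v s a <= c) -> Tb v s <= c.
Proof.
move=> H; rewrite /Tb; apply: (big_ind (fun x => x <= c)) => //.
by move=> x y hx hy; rewrite ge_max hx hy.
Qed.

Lemma Pv_lip (v w : S -> R) e s a : (forall s, `|v s - w s| <= e) ->
  `|Pv M s a v - Pv M s a w| <= e.
Proof.
case: MV => _ [p0 p1] H.
rewrite /Pv -sumrB.
apply: le_trans (ler_norm_sum _ _ _) _.
rewrite -[e]mul1r -(p1 s a) mulr_suml; apply: ler_sum => s' _.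
by rewrite -mulrBr normrM ger0_norm // ler_wpM2l.
Qed.

Lemma Tb_lip (v w : S -> R) e : (forall s, `|v s - w s| <= e) ->
  forall s, `|Tb v s - Tb w s| <= lam * e.
Proof.
move=> H s.
have key : forall v w : S -> R, (forall s, `|v s - w s| <= e) -> Tb v s <= Tb w s + lam * e.
  move=> v' w' H'; apply: Tb_le => a.
  apply: le_trans (_ : Qv w' s a + lam * e <= _); last by rewrite lerD2r Tb_ge.
  rewrite /Qv -addrA lerD2l -mulrDr ler_wpM2l //.
  have := Pv_lip s a H'; rewrite ler_norml => /andP[_].
  by rewrite lerBlDl addrC.
have k1 := key v w H.
have k2 : Tb w s <= Tb v s + lam * e by apply: key => s'; rewrite distrC.
rewrite ler_norml; apply/andP; split; lra.
Qed.

Definition vi (n : nat) : S -> R := iter n Tb (fun _ => 0).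

Lemma vi_bound n s : 0 <= vi n s <= K.
Proof.
case: MV => [rb [p0 p1]].
elim: n s => [|n IH] s /=; first by rewrite lexx ltW // K_gt0.
apply/andP; split.
  apply: le_trans (Tb_ge _ _ a0); rewrite /Qv; apply: addr_ge0; first by case/andP: (rb s a0).
  apply: mulr_ge0 => //; apply: sumr_ge0 => s' _; apply: mulr_ge0 => //.
  by case/andP: (IH s').
apply: Tb_le => a; rewrite /Qv.
have HP : Pv M s a (vi n) <= K.
  rewrite /Pv -[K]mul1r -(p1 s a) mulr_suml; apply: ler_sum => s' _.
  by apply: ler_wpM2l => //; case/andP: (IH s').
apply: le_trans (_ : 1 + lam * K <= _).
  by apply: lerD; [case/andP: (rb s a) | apply: ler_wpM2l].
have := K_eq; move: K_gt0; set k := K => k0 hk.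
by rewrite le_eqVlt; apply/orP; left; apply/eqP; rewrite -hk; ring.
Qed.

Lemma vi_step n s : `|vi n.+1 s - vi n s| <= lam ^+ n.
Proof.
case: MV => [rb [p0 p1]].
elim: n s => [|n IH] s.
  rewrite /= expr0 subr0.
  have := vi_bound 1 s => /andP[h0 _]; rewrite ger0_norm //.
  apply: Tb_le => a; rewrite /Qv /Pv big1 ?mulr0 ?addr0; first by case/andP: (rb s a).
  by move=> s' _; rewrite mulr0.
by rewrite exprS; apply: (Tb_lip IH).
Qed.

Lemma pow_small (x C : R) : (forall m, x <= C * lam ^+ m) -> x <= 0.
Proof.
move=> H.
have cv : (fun m => C * lam ^+ m) @ \oo --> 0.
  rewrite -(mulr0 C); apply: cvgM; first exact: cvg_cst.
  by apply: cvg_expr; rewrite ger0_norm.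
rewrite -(cvg_lim _ cv) //; apply: limr_ge; first by apply/cvg_ex; exists 0.
by apply: nearW.
Qed.

Lemma disc_exists : exists v : S -> R,
  [/\ forall s, 0 <= v s <= K, forall s a, Qv v s a <= v s & forall s, exists a, Qv v s a = v s].
Proof.
pose b s n := vi n s - lam ^+ n * K.
pose a s n := vi n s + lam ^+ n * K.
have Kl n : lam ^+ n * K * (1 - lam) = lam ^+ n by rewrite -mulrA K_eq mulr1.
have bnd s : {homo b s : n m / (n <= m)%N >-> n <= m}.
  apply/nondecreasing_seqP => n; rewrite /b exprS.
  have := vi_step n s; rewrite ler_norml => /andP[h _].
  have := Kl n; move: K_gt0; set k := K => k0 hk.
  rewrite -subr_ge0; apply: le_trans (_ : 0 <= vi n.+1 s - vi n s + lam ^+ n) _.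
    by rewrite -lerBlDr sub0r.
  by rewrite le_eqVlt; apply/orP; left; apply/eqP; rewrite -{1}hk; ring.
have ani s : {homo a s : n m / (n <= m)%N >-> m <= n}.
  apply/nonincreasing_seqP => n; rewrite /a exprS.
  have := vi_step n s; rewrite ler_norml => /andP[_ h].
  have := Kl n; move: K_gt0; set k := K => k0 hk.
  rewrite -subr_ge0; apply: le_trans (_ : 0 <= lam ^+ n - (vi n.+1 s - vi n s)) _.
    by rewrite subr_ge0.
  by rewrite le_eqVlt; apply/orP; left; apply/eqP; rewrite -{1}hk; ring.
have bcv s : cvgn (b s).
  apply/cvg_ex; eexists; apply: nondecreasing_cvgn => //.
  exists K => _ [n _ <-]; rewrite /b.
  have := vi_bound n s => /andP[_ h]; apply: le_trans h.
  rewrite lerBlDr lerDl; apply: mulr_ge0; [exact: exprn_ge0 | exact: ltW K_gt0].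
pose v s := limn (b s).
have vb s m : `|v s - vi m s| <= lam ^+ m * K.
  rewrite ler_norml; apply/andP; split.
    have := nondecreasing_cvgn_le (bnd s) (bcv s) m.
    rewrite /b /v => h; lra.
  rewrite lerBlDl addrC; apply: limr_le => //; exists m => // n /= mn.
  apply: le_trans (_ : b s n <= a s n) _.
    have : 0 <= lam ^+ n * K by rewrite mulr_ge0 ?exprn_ge0 // ltW // K_gt0.
    rewrite /b /a; lra.
  move: (ani s m n mn); rewrite /a; lra.
exists v.
have fix1 s : Tb v s = v s.
  apply/eqP; rewrite -subr_eq0 -normr_le0; apply: (@pow_small _ (K * (lam + lam))) => m.
  have h1 := Tb_lip (vb^~ m) s.
  have h2 := vb s m.+1.
  rewrite [X in X <= _](_ : _ = `|(Tb v s - Tb (vi m) s) + (vi m.+1 s - v s)|); last by rewrite /=; congr `|_|; lra.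
  apply: le_trans (ler_normD _ _) _.
  rewrite distrC in h2.
  have -> : K * (lam + lam) * lam ^+ m = lam * (lam ^+ m * K) + lam ^+ m.+1 * K by rewrite exprS; ring.
  exact: lerD.
split.
- move=> s; apply/andP; split.
    rewrite -oppr_le0; apply: (@pow_small _ K) => m.
    have := vb s m; rewrite ler_norml => /andP[h _].
    have := vi_bound m s => /andP[h0 _]. rewrite mulrC. lra.
  rewrite -subr_le0; apply: (@pow_small _ K) => m.
  have := vb s m; rewrite ler_norml => /andP[_ h].
  have := vi_bound m s => /andP[_ h0]. rewrite mulrC.
  have : 0 <= lam ^+ m * K by rewrite mulr_ge0 ?exprn_ge0 // ltW // K_gt0.
  lra.
- by move=> s a'; apply: le_trans (Tb_ge v s a') _; rewrite fix1.
- by move=> s; have [a' ha] := Tb_ex v s; exists a'; rewrite -ha fix1.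
Qed.

End PartB.
Section PartC.
Variables (R : realType) (S A : finType) (M : mdp R S A).
Hypothesis MV : mdp_valid M.

Lemma diam_pair (D : R) s s' : (diameter M <= D%:E)%E -> s' != s ->
  exists sg : {ffun S -> A}, (exp_hitting_time M sg s s' <= D%:E)%E.
Proof.
move=> HD ns.
have H1 : (\big[Order.min/+oo%E]_(pi : {ffun S -> A}) exp_hitting_time M pi s s' <= D%:E)%E.
  apply: le_trans HD; rewrite /diameter.
  apply: le_trans (le_bigmax _ _ s).
  by rewrite (bigD1 s') //= le_max lexx.
apply/not_existsP => /= Hn; move: H1; apply/negP; rewrite -ltNge.
apply: (big_ind (fun x => (D%:E < x)%E)) => //.
- by rewrite ltry.
- by move=> x y hx hy; rewrite lt_min hx hy.
- by move=> pi _; rewrite ltNge; apply/negP; apply: Hn.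
Qed.

Variable (lam : R).
Hypothesis lam0 : 0 <= lam.
Hypothesis lam1 : lam < 1.

Lemma avoid_ge0 (sg : S -> A) s' n s u : 0 <= avoid M sg s' n s u.
Proof.
case: MV => _ [p0 _].
elim: n u => [|n IH] u /=; first by rewrite ler0n.
case: ifP => // _; apply: sumr_ge0 => w _; exact: mulr_ge0.
Qed.

Lemma span_disc (D : R) (v : S -> R) s s' (sg : S -> A) :
  (forall u, 0 <= v u <= (1 - lam)^-1) ->
  (forall u a, Qv M lam v u a <= v u) ->
  s' != s ->
  (exp_hitting_time M sg s s' <= D%:E)%E ->
  v s' - v s <= D.
Proof.
case: MV => [rb [p0 p1]] vb vQ ns HE.
set K := (1 - lam)^-1.
have K0 : 0 < K by rewrite /K invr_gt0 subr_gt0.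
have KE : K * (1 - lam) = 1 by rewrite /K mulVf // subr_eq0 eq_sym lt_eqF.
pose av n u := avoid M sg s' n s u.
pose q n := \sum_(u : S) av n u.
pose F n w := \sum_(u : S) av n u * ptr M u (sg u) w.
have avS n w : av n.+1 w = if w == s' then 0 else F n w by [].
have F0 n w : 0 <= F n w by apply: sumr_ge0 => u _; apply: mulr_ge0 => //; apply: avoid_ge0.
have sumF n : \sum_(w : S) F n w = q n.
  rewrite /F exchange_big /=; apply: eq_bigr => u _.
  by rewrite -mulr_sumr p1 mulr1.
have qS n : q n.+1 = q n - F n s'.
  rewrite -(sumF n) (bigD1 s') //= /q (bigD1 s') //= avS eqxx add0r.
  rewrite [F n s' + _]addrC addrK.
  by apply: eq_bigr => w /negbTE hw; rewrite avS hw.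
have q0 n : 0 <= q n by apply: sumr_ge0 => u _; apply: avoid_ge0.
have qdec n m : (n <= m)%N -> q m <= q n.
  elim: m => [|m IH]; first by rewrite leqn0 => /eqP ->.
  rewrite leq_eqVlt => /orP[/eqP -> //| ]; rewrite ltnS => /IH h.
  by apply: le_trans h; rewrite qS lerBlDr lerDl.
have psum n : \sum_(k < n) q k <= D.
  have := @nneseries_lim_ge R (fun k => (q k)%:E) xpredT 0%N n (fun k _ _ => q0 k).
  rewrite /exp_hitting_time in HE => h.
  have := le_trans h HE; rewrite sumEFin lee_fin.
  by rewrite big_mkord.
have D0 : 0 <= D by apply: le_trans (psum 1%N); rewrite big_ord1; apply: q0.
pose Sg n := \sum_(k < n) lam ^+ k * q k.
pose An n := \sum_(u : S) av n u * v u.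
have A0 n : 0 <= An n.
  by apply: sumr_ge0 => u _; apply: mulr_ge0; [apply: avoid_ge0 | case/andP: (vb u)].
have claim n : lam ^+ n * An n + (1 - (1 - lam) * Sg n - lam ^+ n * q n) * v s' <= v s.
  elim: n => [|n IH].
    rewrite /Sg big_ord0 expr0 !mul1r mulr0 subr0.
    have e : forall f : S -> R, \sum_(u : S) av 0%N u * f u = f s.
      move=> f; rewrite (bigD1 s) //= /av /= eqxx mul1r big1 ?addr0 // => u /negbTE.
      by rewrite eq_sym => ->; rewrite mul0r.
    have eA : An 0%N = v s := e v.
    have eq0 : q 0%N = 1 by rewrite /q -(e (fun _ => 1)); apply: eq_bigr => u _; rewrite mulr1.
    rewrite eA eq0 /=; lra.
  apply: le_trans IH.
  have key : lam * (An n.+1 + F n s' * v s') <= An n.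
    have -> : An n.+1 + F n s' * v s' = \sum_(w : S) F n w * v w.
      rewrite (bigD1 s') //= /An (bigD1 s') //= avS eqxx mul0r add0r addrC.
      congr (_ + _); apply: eq_bigr => w /negbTE hw; by rewrite avS hw.
    have -> : \sum_(w : S) F n w * v w = \sum_(u : S) av n u * Pv M u (sg u) v.
      rewrite /F /Pv.
      under eq_bigr do rewrite mulr_suml.
      rewrite exchange_big /=; apply: eq_bigr => u _.
      rewrite mulr_sumr; apply: eq_bigr => w _; by rewrite mulrA.
    rewrite mulr_sumr; apply: ler_sum => u _.
    rewrite mulrCA; apply: ler_wpM2l; first exact: avoid_ge0.
    apply: le_trans (vQ u (sg u)); rewrite /Qv lerDr.
    by case/andP: (rb u (sg u)).
  have eSg : Sg n.+1 = Sg n + lam ^+ n * q n by rewrite /Sg big_ord_recr.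
  rewrite eSg qS exprS.
  have ln0 : 0 <= lam ^+ n by apply: exprn_ge0.
  have := ler_wpM2l ln0 key.
  set X := lam ^+ n; set Y := An n.+1; set Z := F n s'; set W := v s'.
  set Q := q n; set T := Sg n; set U := An n.
  move=> h.
  rewrite -subr_ge0; set G := (_ - _).
  have -> : G = X * U - X * (lam * (Y + Z * W)) by rewrite /G; ring.
  by rewrite subr_ge0.
have fin n : (0 < n)%N -> v s' - v s <= D + K * D / n%:R.
  move=> n0.
  have := claim n; have := A0 n.
  have hv := vb s'; case/andP: hv => v0 vK.
  have hS : Sg n <= D.
    apply: le_trans (psum n); apply: ler_sum => k _.
    rewrite -[X in _ <= X]mul1r ler_wpM2r //; apply: exprn_ile1 => //; exact: ltW.
  have hS0 : 0 <= Sg n by apply: sumr_ge0 => k _; apply: mulr_ge0 => //; apply: exprn_ge0.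
  have hq : n%:R * q n <= D.
    apply: le_trans (psum n).
    rewrite -[n in n%:R * _](card_ord n) -sum1_card natr_sum mulr_suml.
    by apply: ler_sum => k _; rewrite mul1r; apply: qdec; apply: ltnW.
  have nR : (0 : R) < n%:R by rewrite ltr0n.
  have hq' : q n <= D / n%:R by rewrite ler_pdivlMr // mulrC.
  have l1 : 0 <= lam ^+ n by apply: exprn_ge0.
  have l2 : lam ^+ n <= 1 by apply: exprn_ile1 => //; exact: ltW.
  have t1 : (1 - lam) * Sg n * v s' <= D.
    apply: le_trans (_ : (1 - lam) * D * K <= D).
      apply: ler_pM => //; first by apply: mulr_ge0 => //; rewrite subr_ge0 ltW.
      by apply: ler_wpM2l => //; rewrite subr_ge0 ltW.
    by rewrite mulrAC [_ * K]mulrC KE mul1r.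
  have t2 : lam ^+ n * q n * v s' <= K * D / n%:R.
    apply: le_trans (_ : 1 * (D / n%:R) * K <= _); last by rewrite mul1r mulrC mulrA.
    apply: ler_pM => //; first by apply: mulr_ge0 => //.
    by apply: ler_pM.
  move=> h1 h2.
  have h3 : 0 <= lam ^+ n * An n by apply: mulr_ge0.
  have : v s' - v s <= (1 - lam) * Sg n * v s' + lam ^+ n * q n * v s'.
    rewrite -subr_ge0; set G := (_ - _).
    have -> : G = v s - (lam ^+ n * An n + (1 - (1 - lam) * Sg n - lam ^+ n * q n) * v s') + lam ^+ n * An n by rewrite /G; ring.
    by apply: addr_ge0 => //; rewrite subr_ge0.
  move=> h4; apply: le_trans h4 _; exact: lerD.
apply/ler_addgt0Pr => e e0.
have KD0 : 0 <= K * D by apply: mulr_ge0 => //; exact: ltW.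
have [N [N0 HN]] := small_eventually KD0 e0.
apply: le_trans (fin N N0) _; rewrite lerD2l; exact: HN.
Qed.


End PartC.
Section Helpers.
Variable R : realType.

Lemma incr_ge (f : nat -> nat) : increasing_seq f -> forall j, (j <= f j)%N.
Proof.
move=> fi; elim => [//|j IH].
have h := (proj2 (increasing_seqP f) fi) j.
by apply: leq_ltn_trans IH h.
Qed.

Lemma subseq_cvg (u : nat -> R) (f : nat -> nat) (l : R) :
  increasing_seq f -> u @ \oo --> l -> (u \o f) @ \oo --> l.
Proof.
move=> fi /cvgrPdist_le H; apply/cvgrPdist_le => e e0.
have [N _ HN] := H e e0.
exists N => // n /= Nn; apply: HN => /=.
by apply: leq_trans Nn (incr_ge fi n).
Qed.

Lemma incr_comp (f g : nat -> nat) : increasing_seq f -> increasing_seq g ->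
  increasing_seq (f \o g).
Proof.
move=> fi gi m n /=.
have e1 := fi (g m) (g n).
have e2 := gi m n.
rewrite e1; exact: e2.
Qed.

Lemma bw_fin (T : finType) (u : nat -> T -> R) (B : R) :
  (forall j t, `|u j t| <= B) ->
  exists2 phi : nat -> nat, increasing_seq phi & forall t, cvgn (fun j => u (phi j) t).
Proof.
move=> Hb.
suff : forall l : seq T, exists2 phi : nat -> nat, increasing_seq phi &
    forall t, t \in l -> cvgn (fun j => u (phi j) t).
  by move=> /(_ (enum T))[phi pi H]; exists phi => // t; apply: H; rewrite mem_enum.
elim => [|t l [phi pi IH]].
  by exists id => //.
have bf : bounded_fun (fun j => u (phi j) t).
  exists B; split; first by rewrite num_real.
  by move=> x Bx y _ /=; apply: le_trans (Hb _ _) (ltW Bx).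
have [psi psii cv] := bolzano_weierstrass bf.
exists (phi \o psi); first exact: incr_comp.
move=> t'; rewrite inE => /orP[/eqP -> //|tl].
have [l' hl'] := (cvg_ex _).1 (IH t' tl).
by apply/cvg_ex; exists l'; apply: (subseq_cvg (u := fun j => u (phi j) t')).
Qed.

Lemma cvg_sumR (I : Type) (r : seq I) (f : I -> nat -> R) (l : I -> R) :
  (forall i, f i @ \oo --> l i) ->
  (fun n => \sum_(i <- r) f i n) @ \oo --> \sum_(i <- r) l i.
Proof.
move=> H; elim: r => [|i r IH].
  rewrite big_nil; under eq_fun do rewrite big_nil; exact: cvg_cst.
rewrite big_cons; under eq_fun do rewrite big_cons.
exact: cvgD.
Qed.

End Helpers.
Section PartD.
Variables (R : realType) (S A : finType) (M : mdp R S A).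
Hypothesis MV : mdp_valid M.
Variables (a0 : A) (s0 : S) (D : R).
Hypothesis D0 : 0 <= D.
Hypothesis HD : (diameter M <= D%:E)%E.

Definition lamk (k : nat) : R := 1 - (k.+2%:R)^-1.

Lemma lamk_ge0 k : 0 <= lamk k.
Proof.
rewrite /lamk subr_ge0 invf_le1 ?ltr0n // ler1n //.
Qed.

Lemma lamk_lt1 k : lamk k < 1.
Proof. by rewrite /lamk ltrBlDr ltrDl invr_gt0 ltr0n. Qed.

Lemma lamk_inv k : (1 - lamk k)^-1 = k.+2%:R.
Proof. by rewrite /lamk opprB addrC subrK invrK. Qed.

Lemma Pv_shift s a (v : S -> R) c : Pv M s a (fun s' => v s' - c) = Pv M s a v - c.
Proof.
case: MV => _ [_ p1].
rewrite /Pv; under eq_bigr do rewrite mulrBr.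
by rewrite sumrB -mulr_suml p1 mul1r.
Qed.

Lemma aoe_exists : exists g (h : S -> R) (pi : {ffun S -> A}),
  [/\ forall s a, rbar M s a + Pv M s a h <= g + h s,
      forall s, rbar M s (pi s) + Pv M s (pi s) h = g + h s
    & forall s s', h s' - h s <= D].
Proof.
have ex k : exists vp : (S -> R) * {ffun S -> A},
   [/\ forall s, 0 <= vp.1 s <= (1 - lamk k)^-1,
       forall s a, Qv M (lamk k) vp.1 s a <= vp.1 s
     & forall s, Qv M (lamk k) vp.1 s (vp.2 s) = vp.1 s].
  have [v [vb vq ve]] := disc_exists MV a0 (lamk_ge0 k) (lamk_lt1 k).
  exists (v, [ffun s => proj1_sig (cid (ve s))]); split => //= s.
  by rewrite ffunE; exact: (proj2_sig (cid (ve s))).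
have [VP HVP] := choice ex.
pose V k := (VP k).1.
pose Pi k := (VP k).2.
have span k s s' : V k s' - V k s <= D.
  have [->|ns] := eqVneq s' s; first by rewrite subrr.
  have [sg Hsg] := diam_pair HD ns.
  have [vb vq _] := HVP k.
  exact: (span_disc MV (lamk_ge0 k) (lamk_lt1 k) vb vq ns Hsg).
have [pi Hpi] : exists pi, forall N, exists k, (N <= k)%N /\ Pi k = pi.
  apply: contrapT => Hn.
  have H1 p : exists N, forall k, (N <= k)%N -> Pi k <> p.
    apply: contrapT => h1; apply: Hn; exists p => N; apply: contrapT => h2.
    by apply: h1; exists N => k Nk E; apply: h2; exists k.
  have [Nf HNf] := choice H1.
  pose Nm := (\max_(p : {ffun S -> A}) Nf p)%N.
  exact: (HNf (Pi Nm) Nm (leq_bigmax _)).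
have [kap Hkap] := choice Hpi.
pose u j (o : option S) := match o with
  | None => (1 - lamk (kap j)) * V (kap j) s0
  | Some s => V (kap j) s - V (kap j) s0 end.
have ub j o : `|u j o| <= 1 + D.
  case: o => [s|] /=.
    apply: le_trans (_ : D <= _); last by rewrite lerDr.
    rewrite ler_norml; have := span (kap j) s s0; have := span (kap j) s0 s; lra.
  have [vb _ _] := HVP (kap j).
  have := vb s0; rewrite -/(V _) => /andP[h0 h1].
  have l0 : 0 <= 1 - lamk (kap j) by rewrite subr_ge0 ltW // lamk_lt1.
  apply: le_trans (_ : 1 <= _); last by rewrite lerDl.
  rewrite ger0_norm ?mulr_ge0 //.
  have := ler_wpM2l l0 h1; rewrite mulfV //.
  by rewrite subr_eq0 eq_sym lt_eqF // lamk_lt1.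
have [phi phii cvu] := bw_fin ub.
pose g := limn (fun j => u (phi j) None).
pose h s := limn (fun j => u (phi j) (Some s)).
have cvX s : (fun j => u (phi j) (Some s)) @ \oo --> h s by exact: cvu.
have cvY : (fun j => u (phi j) None) @ \oo --> g by exact: cvu.
pose L j := lamk (kap (phi j)).
have cvL : L @ \oo --> (1 : R).
  apply: (cvg_bound (B := 1)) => // j j0.
  rewrite /L /lamk addrC addKr normrN ger0_norm ?invr_ge0 ?ler0n //.
  rewrite mul1r lef_pV2 ?posrE ?ltr0n // ler_nat.
  have := (Hkap (phi j)).1; have := incr_ge phii j => h1 h2.
  by apply: leq_trans (leq_trans h1 h2) _; rewrite ltnW.
pose E j s a := u (phi j) (Some s) + u (phi j) None - rbar M s a
   - L j * Pv M s a (fun s' => u (phi j) (Some s')).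
have EQ j s a : E j s a = V (kap (phi j)) s - Qv M (lamk (kap (phi j))) (V (kap (phi j))) s a.
  rewrite /E /= Pv_shift /Qv /L; ring.
have cvE s a : (fun j => E j s a) @ \oo --> h s + g - rbar M s a - 1 * Pv M s a h.
  apply: cvgB; last first.
    apply: cvgM => //; rewrite /Pv; apply: cvg_sumR => s'.
    by apply: cvgM => //; exact: cvg_cst.
  apply: cvgB; last exact: cvg_cst.
  exact: cvgD.
have E0 j s a : 0 <= E j s a.
  by rewrite EQ subr_ge0; have [_ vq _] := HVP (kap (phi j)); apply: vq.
have Epi j s : E j s (pi s) = 0.
  rewrite EQ; have [_ _ ve] := HVP (kap (phi j)).
  by rewrite -(Hkap (phi j)).2 ve subrr.
exists g, h, pi; split.
- move=> s a.
  have : 0 <= h s + g - rbar M s a - 1 * Pv M s a h.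
    rewrite -(cvg_lim _ (cvE s a)) //; apply: limr_ge; first by apply/cvg_ex; eexists; exact: cvE.
    by apply: nearW.
  rewrite mul1r; lra.
- move=> s.
  have e1 : h s + g - rbar M s (pi s) - 1 * Pv M s (pi s) h = 0.
    rewrite -(cvg_lim _ (cvE s (pi s))) //.
    have -> : (fun j => E j s (pi s)) = (fun _ => 0) by apply: funext => j; exact: Epi.
    by apply: cvg_lim => //; exact: cvg_cst.
  move: e1; rewrite mul1r; lra.
- move=> s s'.
  have cvd : (fun j => u (phi j) (Some s') - u (phi j) (Some s)) @ \oo --> h s' - h s.
    by apply: cvgB.
  rewrite -(cvg_lim _ cvd) //; apply: limr_le; first by apply/cvg_ex; eexists; exact: cvd.
  apply: nearW => j /=.
  have -> : V (kap (phi j)) s' - V (kap (phi j)) s0 - (V (kap (phi j)) s - V (kap (phi j)) s0) = V (kap (phi j)) s' - V (kap (phi j)) s by ring.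
  exact: span.
Qed.
End PartD.
Section PartE.
Variables (R : realType) (S A : finType).

Definition dr (M1 M2 : mdp R S A) : R :=
  \big[Num.max/0]_(s : S) \big[Num.max/0]_(a : A) `|rbar M1 s a - rbar M2 s a|.
Definition dp (M1 M2 : mdp R S A) : R :=
  \big[Num.max/0]_(s : S) \big[Num.max/0]_(a : A) \sum_(s' : S) `|ptr M1 s a s' - ptr M2 s a s'|.

Lemma bigmax_ge0 (I : finType) (F : I -> R) : 0 <= \big[Num.max/0]_(i : I) F i.
Proof. by apply: (big_rec (fun x => 0 <= x)) => // i x _ hx; rewrite le_max hx orbT. Qed.

Lemma bigmax_elem (I : finType) (F : I -> R) i : F i <= \big[Num.max/0]_(i : I) F i.
Proof. by rewrite (bigD1 i) //= le_max lexx. Qed.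

Lemma bigmax_ub (I : finType) (F : I -> R) c : 0 <= c -> (forall i, F i <= c) ->
  \big[Num.max/0]_(i : I) F i <= c.
Proof. by move=> c0 H; apply: (big_ind (fun x => x <= c)) => // x y hx hy; rewrite ge_max hx. Qed.

Lemma dr_ge0 M1 M2 : 0 <= dr M1 M2. Proof. exact: bigmax_ge0. Qed.
Lemma dp_ge0 M1 M2 : 0 <= dp M1 M2. Proof. exact: bigmax_ge0. Qed.

Lemma dr_sym M1 M2 : dr M1 M2 = dr M2 M1.
Proof. by apply: eq_bigr => s _; apply: eq_bigr => a _; rewrite distrC. Qed.
Lemma dp_sym M1 M2 : dp M1 M2 = dp M2 M1.
Proof.
apply: eq_bigr => s _; apply: eq_bigr => a _; apply: eq_bigr => s' _; by rewrite distrC.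
Qed.

Lemma dr_elem M1 M2 s a : `|rbar M1 s a - rbar M2 s a| <= dr M1 M2.
Proof.
apply: le_trans (bigmax_elem _ s).
exact: (bigmax_elem (fun a => `|rbar M1 s a - rbar M2 s a|) a).
Qed.

Lemma dp_elem M1 M2 s a : \sum_(s' : S) `|ptr M1 s a s' - ptr M2 s a s'| <= dp M1 M2.
Proof.
apply: le_trans (bigmax_elem _ s).
exact: (bigmax_elem (fun a => \sum_(s' : S) `|ptr M1 s a s' - ptr M2 s a s'|) a).
Qed.

Lemma opt_ge0 (M : mdp R S A) s1 : 0 <= opt_avg_reward M s1.
Proof. exact: bigmax_ge0. Qed.

Lemma pair_bound (M M' : mdp R S A) (s1 : S) (D : R) :
  mdp_valid M -> mdp_valid M' -> 0 <= D -> (diameter M <= D%:E)%E ->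
  opt_avg_reward M' s1 <= opt_avg_reward M s1 + (dr M' M + D * dp M' M).
Proof.
move=> MV MV' D0 HD.
have dl0 : 0 <= dr M' M + D * dp M' M by rewrite addr_ge0 ?dr_ge0 ?mulr_ge0 ?dp_ge0.
have c0 : 0 <= opt_avg_reward M s1 + (dr M' M + D * dp M' M) by rewrite addr_ge0 ?opt_ge0.
have [a0|nA] := pselect (exists a : A, True); last first.
  apply: le_trans _ c0; rewrite le_eqVlt; apply/orP; left; apply/eqP.
  rewrite /opt_avg_reward big_pred0 // => pi; exfalso; apply: nA; by exists (pi s1).
case: a0 => a0 _.
have [g [h [pi [hI hE hS]]]] := aoe_exists MV a0 s1 D0 HD.
have hS' s s' : `|h s' - h s| <= D by rewrite ler_norml; have := hS s s'; have := hS s' s; lra.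
have avg : avg_reward M pi s1 = g.
  rewrite /avg_reward; apply: cvg_lim => //.
  apply: (cvg_bound (B := D)) => // n n0.
  rewrite (sum_exp_reward M pi s1 h n).
  have e : forall t : nat, \sum_(s : S) Pn M pi t s1 s * (rbar M s (pi s) + Pv M s (pi s) h - h s) = g.
    move=> t; under eq_bigr do rewrite hE addrK.
    by rewrite -mulr_suml (Pn_sum1 MV) mul1r.
  under eq_bigr do rewrite e.
  rewrite sumr_const card_ord.
  have nR : (n%:R : R) != 0 by rewrite pnatr_eq0 -lt0n.
  have -> : n%:R^-1 * (g *+ n + h s1 - Hn M pi s1 h n) - g = (h s1 - Hn M pi s1 h n) / n%:R.
    by rewrite -mulr_natr; field.
  rewrite normrM [`|_^-1|]ger0_norm ?invr_ge0 ?ler0n // ler_wpM2r ?invr_ge0 ?ler0n //.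
  exact: Hn_span.
have gle : g <= opt_avg_reward M s1.
  by rewrite -avg /opt_avg_reward; exact: (bigmax_elem (fun p : {ffun S -> A} => avg_reward M p s1) pi).
apply: bigmax_ub => // sg.
set dl := dr M' M + D * dp M' M.
apply: (limn_le_bound (B := D)) => // n n0.
rewrite (sum_exp_reward M' sg s1 h n).
have step t : \sum_(s : S) Pn M' sg t s1 s * (rbar M' s (sg s) + Pv M' s (sg s) h - h s) <= g + dl.
  rewrite -[g + dl]mul1r -(Pn_sum1 MV' sg t s1) mulr_suml; apply: ler_sum => s _.
  apply: ler_wpM2l; first exact: Pn_ge0.
  have h1 := hI s (sg s).
  have h2 := dr_elem M' M s (sg s).
  have h3 : `|Pv M' s (sg s) h - Pv M s (sg s) h| <= D * dp M' M.
    case: MV => _ [_ p1]; case: MV' => _ [_ p1'].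
    have -> : Pv M' s (sg s) h - Pv M s (sg s) h
        = \sum_(s' : S) (ptr M' s (sg s) s' - ptr M s (sg s) s') * (h s' - h s).
      rewrite /Pv; under [RHS]eq_bigr do rewrite mulrBr.
      have z : \sum_(s' : S) (ptr M' s (sg s) s' - ptr M s (sg s) s') * h s = 0.
        by rewrite -mulr_suml sumrB p1 p1' subrr mul0r.
      rewrite [RHS]sumrB z subr0 -sumrB.
      by apply: eq_bigr => s' _; rewrite mulrBl.
    apply: le_trans (ler_norm_sum _ _ _) _.
    apply: le_trans (_ : \sum_(s' : S) `|ptr M' s (sg s) s' - ptr M s (sg s) s'| * D <= _).
      apply: ler_sum => s' _; rewrite normrM; apply: ler_wpM2l => //.
    rewrite -mulr_suml mulrC; apply: ler_wpM2l => //; exact: dp_elem.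
  rewrite /dl.
  have := ler_norm (rbar M' s (sg s) - rbar M s (sg s)).
  have := ler_norm (Pv M' s (sg s) h - Pv M s (sg s) h).
  lra.
have hsum : \sum_(t < n) \sum_(s : S) Pn M' sg t s1 s * (rbar M' s (sg s) + Pv M' s (sg s) h - h s) <= (g + dl) *+ n.
  apply: le_trans (_ : \sum_(t < n) (g + dl) <= _).
    by apply: ler_sum => t _; exact: step.
  by rewrite sumr_const card_ord.
have hH : h s1 - Hn M' sg s1 h n <= D.
  by apply: le_trans (ler_norm _) _; apply: Hn_span.
have nR : (0 : R) < n%:R by rewrite ltr0n.
rewrite -mulr_natr in hsum.
set X := \sum_(t < n) _ in hsum *.
apply: le_trans (_ : n%:R^-1 * ((g + dl) * n%:R + D) <= _).
  by rewrite ler_wpM2l ?invr_ge0 ?ler0n //; lra.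
have -> : n%:R^-1 * ((g + dl) * n%:R + D) = g + dl + D / n%:R by field; rewrite gt_eqF.
by rewrite lerD2r lerD2r.
Qed.

End PartE.
Section PartF.
Variables (R : realType) (S A : finType).

Lemma subsingleton_of_neg (M : mdp R S A) (D : R) :
  mdp_valid M -> (diameter M <= D%:E)%E -> D < 0 -> forall s s' : S, s = s'.
Proof.
move=> MV HD Dn s s'; apply: contrapT => ns.
have ns' : s' != s by apply/eqP => E; apply: ns; rewrite E.
have [sg Hsg] := diam_pair HD ns'.
have q0 : forall n, (0%R <= (\sum_(u : S) avoid M sg s' n s u)%:E)%E.
  by move=> n; rewrite lee_fin; apply: sumr_ge0 => u _; apply: avoid_ge0.
have := @nneseries_lim_ge R (fun n => (\sum_(u : S) avoid M sg s' n s u)%:E) xpredT 0%N 1%N (fun k _ _ => q0 k).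
rewrite /exp_hitting_time in Hsg => h; have := le_trans h Hsg.
rewrite big_nat1 lee_fin /=.
rewrite (bigD1 s) //= eqxx big1 ?addr0 //; last by move=> u /negbTE; rewrite eq_sym => ->.
move=> h1; have h2 : (1 : R) <= D by exact: h1.
clear -Dn h2.
lra.
Qed.

Lemma dp_zero (M1 M2 : mdp R S A) : mdp_valid M1 -> mdp_valid M2 ->
  (forall s s' : S, s = s') -> dp M1 M2 = 0.
Proof.
move=> [_ [_ p1]] [_ [_ p2]] ss.
have one (M : mdp R S A) (p : forall s a, \sum_(s' : S) ptr M s a s' = 1) s a s' : ptr M s a s' = 1.
  rewrite -(p s a) (bigD1 s') //= big1 ?addr0 // => u /eqP; by rewrite (ss u s').
apply/eqP; rewrite eq_le dp_ge0 andbT; apply: bigmax_ub => // s.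
apply: bigmax_ub => // a.
by rewrite big1 // => s' _; rewrite (one M1 p1) (one M2 p2) subrr normr0.
Qed.

End PartF.

Theorem theorem1 (R : realType) (S A : finType) (M : nat -> mdp R S A)
  (s1 : S) (T : nat) (D : R) :
  (forall t, (1 <= t <= T)%N ->
     [/\ mdp_valid (M t), communicating (M t) & (diameter (M t) <= D%:E)%E]) ->
  var_opt M s1 T <= var_reward M T + D * var_trans M T.
Proof.
move=> H.
rewrite /var_opt /var_reward /var_trans mulr_sumr -big_split /=.
rewrite big_nat_cond [X in _ <= X]big_nat_cond; apply: ler_sum => t /andP[/andP[t1 tT] _].
have [V0 _ D1] := H t.+1 (tT : (1 <= t.+1 <= T)%N).
have [V1 _ D2] : [/\ mdp_valid (M t), communicating (M t) & (diameter (M t) <= D%:E)%E].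
  by apply: H; rewrite t1 /= ltnW.
set D' := Num.max D 0.
have D'0 : 0 <= D' by rewrite le_max lexx orbT.
have DD : D <= D' by rewrite le_max lexx.
have D1' : (diameter (M t.+1) <= D'%:E)%E by apply: le_trans D1 _; rewrite lee_fin.
have D2' : (diameter (M t) <= D'%:E)%E by apply: le_trans D2 _; rewrite lee_fin.
have b1 := pair_bound s1 V1 V0 D'0 D2'.
have b2 := pair_bound s1 V0 V1 D'0 D1'.
rewrite dr_sym dp_sym in b2.
have e : D' * dp (M t.+1) (M t) = D * dp (M t.+1) (M t).
  have [D0|Dn] := leP 0 D; first by rewrite /D' max_l.
  by rewrite (dp_zero V0 V1 (subsingleton_of_neg V1 D2 Dn)) !mulr0.
change (`|opt_avg_reward (M t.+1) s1 - opt_avg_reward (M t) s1| <= dr (M t.+1) (M t) + D * dp (M t.+1) (M t)).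
rewrite -e ler_norml; apply/andP; split; lra.
Qed.
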